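(* Let $0<\alpha\le \pi/4$ and let $\mathcal N_\alpha(\rho)=E_\alpha\rho E_\alpha^\dagger+D_\alpha\rho D_\alpha^\dagger$ on $\mathcal L(\mathbb C^3)$ with $E_\alpha=\sin\alpha\,|0\rangle\langle 1|+|1\rangle\langle 2|$ and $D_\alpha=\cos\alpha\,|2\rangle\langle 1|+|1\rangle\langle 0|$. Let $S=\mathrm{span}\{E^\dagger F: E,F\in\{E_\alpha,D_\alpha\}\}$ be its non-commutative graph. Then $$\tilde\vartheta(\mathcal N_\alpha):=\tilde\vartheta(S)=2+\cos^2\alpha+\cos^{-2}\alpha>4.$$
   Context: For a subspace $S\subseteq\mathcal L(A')$ (with $A\cong A'$, $|\Phi\rangle=\sum_i|i\rangle_A|i\rangle_{A'}$), the quantum Lovász number is the SDP value $\tilde\vartheta(S)=\max\{\langle\Phi|(\mathbb 1\otimes\rho+T)|\Phi\rangle:\ T\in S^\perp\otimes\mathcal L(A'),\ \mathrm{tr}\rho=1,\ \rho\ge0,\ \mathbb 1\otimes\rho+T\ge0\}$, where $S^\perp$ is the orthogonal complement of $S$ with respect to the Hilbert–Schmidt inner product. Equivalently (by strong duality) $\tilde\vartheta(S)=\min\{\|\mathrm{tr}_A Y\|_\infty:\ Y\in S\otimes\mathcal L(A'),\ Y\ge|\Phi\rangle\langle\Phi|\}$. *)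

(* Defs.v *)
From HB Require Import structures.
From mathcomp Require Import all_boot all_order all_algebra.
From mathcomp Require Import complex mxtens.
From mathcomp Require Import reals trigo.
Set Implicit Arguments. Unset Strict Implicit. Unset Printing Implicit Defensive.
Import Order.TTheory GRing.Theory Num.Theory.
Local Open Scope ring_scope.

Section QL.
Variable R : realType.
Local Notation C := (complex R).

Definition adjmx m n (M : 'M[C]_(m, n)) : 'M[C]_(n, m) := (map_mx Num.conj M)^T.

Definition psdmx n (M : 'M[C]_n) : Prop :=
  M = adjmx M /\ forall v : 'cV[C]_n, 0 <= (adjmx v *m M *m v) 0 0.

Definition hs n (X Y : 'M[C]_n) : C := \tr (adjmx X *m Y).

Definition in_span n (gens : seq 'M[C]_n) (X : 'M[C]_n) : Prop :=
  exists c : 'I_(size gens) -> C,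
    X = \sum_(i < size gens) c i *: nth 0 gens i.

Definition in_perp n (S : 'M[C]_n -> Prop) (X : 'M[C]_n) : Prop :=
  forall Y, S Y -> hs Y X = 0.

(* The subspace V (x) L(A') of L(A (x) A'), with A' = C^n *)
Definition in_tens_full n (V : 'M[C]_n -> Prop) (T : 'M[C]_(n * n)) : Prop :=
  exists (k : nat) (v : 'I_k -> 'M[C]_n) (M : 'I_k -> 'M[C]_n),
    (forall i, V (v i)) /\ T = \sum_(i < k) (v i *t M i).

(* Unnormalized maximally entangled vector |Phi> = sum_i |i>_A |i>_A' *)
Definition Phi n : 'cV[C]_(n * n) :=
  \sum_(i < n) ((delta_mx i 0 : 'cV[C]_n) *t (delta_mx i 0 : 'cV[C]_n)).

Definition qlov_obj n (rho : 'M[C]_n) (T : 'M[C]_(n * n)) : C :=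
  (adjmx (Phi n) *m ((1%:M : 'M[C]_n) *t rho + T) *m Phi n) 0 0.

Definition is_qlovasz n (S : 'M[C]_n -> Prop) (v : C) : Prop :=
  (exists (rho : 'M[C]_n) (T : 'M[C]_(n * n)),
      in_tens_full (in_perp S) T /\ \tr rho = 1 /\ psdmx rho /\
      psdmx ((1%:M : 'M[C]_n) *t rho + T) /\ qlov_obj rho T = v) /\
  (forall (rho : 'M[C]_n) (T : 'M[C]_(n * n)),
      in_tens_full (in_perp S) T -> \tr rho = 1 -> psdmx rho ->
      psdmx ((1%:M : 'M[C]_n) *t rho + T) -> qlov_obj rho T <= v).

Definition nc_graph n (Ks : seq 'M[C]_n) : 'M[C]_n -> Prop :=
  in_span [seq adjmx E *m F | E <- Ks, F <- Ks].

(* Kraus operators of N_alpha on C^3, with |i><j| = delta_mx i j *)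
Definition E_al (a : R) : 'M[C]_3 :=
  ((sin a)%:C)%C *: delta_mx 0 1 + delta_mx 1 2.
Definition D_al (a : R) : 'M[C]_3 :=
  ((cos a)%:C)%C *: delta_mx 2 1 + delta_mx 1 0.

End QL.

(* Main.v *)
Require Import Defs.
From HB Require Import structures.
From mathcomp Require Import all_boot all_order all_algebra.
From mathcomp Require Import complex mxtens.
From mathcomp Require Import reals trigo.
From mathcomp Require Import ring lra.
Import Order.TTheory GRing.Theory Num.Theory.
Local Open Scope ring_scope.
Module M_Infra.
Set Implicit Arguments. Unset Strict Implicit. Unset Printing Implicit Defensive.

Section Infra.
Variable R : realType.
Local Notation C := (complex R).

Lemma conjR (x : R) : ((x%:C)%C : C)^* = (x%:C)%C.
Proof. exact: conjc_real. Qed.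

Lemma adjmxE m n (M : 'M[C]_(m,n)) i j : adjmx M i j = (M j i)^*.
Proof. by rewrite /adjmx !mxE. Qed.

Lemma adjmxD m n (A B : 'M[C]_(m,n)) : adjmx (A + B) = adjmx A + adjmx B.
Proof. by apply/matrixP=> i j; rewrite !(adjmxE, mxE) rmorphD. Qed.

Lemma adjmxZ m n k (A : 'M[C]_(m,n)) : adjmx (k *: A) = k^* *: adjmx A.
Proof. by apply/matrixP=> i j; rewrite !(adjmxE, mxE) rmorphM. Qed.

Lemma adjmxK m n (A : 'M[C]_(m,n)) : adjmx (adjmx A) = A.
Proof. by apply/matrixP=> i j; rewrite !adjmxE conjCK. Qed.

Lemma adjmxM m n p (A : 'M[C]_(m,n)) (B : 'M[C]_(n,p)) :
  adjmx (A *m B) = adjmx B *m adjmx A.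
Proof.
apply/matrixP=> i j; rewrite adjmxE !mxE rmorph_sum; apply: eq_bigr=> k _.
by rewrite !adjmxE rmorphM mulrC.
Qed.

Lemma adjmx_delta m n (i : 'I_m) (j : 'I_n) :
  adjmx (delta_mx i j : 'M[C]_(m,n)) = delta_mx j i.
Proof. by apply/matrixP=> a b; rewrite adjmxE !mxE rmorph_nat andbC. Qed.

Lemma adjmx_sum m n k (F : 'I_k -> 'M[C]_(m,n)) :
  adjmx (\sum_(t < k) F t) = \sum_(t < k) adjmx (F t).
Proof.
apply/matrixP=> i j; rewrite adjmxE !summxE rmorph_sum.
by apply: eq_bigr=> t _; rewrite adjmxE.
Qed.

Definition qf n (X : 'M[C]_n) (u w : 'cV[C]_n) : C := (adjmx u *m X *m w) 0 0.

Lemma qfE n (X : 'M[C]_n) u w :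
  qf X u w = \sum_a \sum_b (u a 0)^* * X a b * w b 0.
Proof.
rewrite /qf mxE [RHS]exchange_big /=; apply: eq_bigr=> b _.
rewrite mxE big_distrl /=; apply: eq_bigr=> a _.
by rewrite adjmxE.
Qed.

Lemma qfDl n (X : 'M[C]_n) u u' w : qf X (u + u') w = qf X u w + qf X u' w.
Proof.
rewrite !qfE -big_split; apply: eq_bigr=> a _; rewrite -big_split.
by apply: eq_bigr=> b _; rewrite mxE rmorphD /=; ring.
Qed.

Lemma qfDr n (X : 'M[C]_n) u w w' : qf X u (w + w') = qf X u w + qf X u w'.
Proof.
rewrite !qfE -big_split; apply: eq_bigr=> a _; rewrite -big_split.
by apply: eq_bigr=> b _; rewrite mxE /=; ring.
Qed.

Lemma qfZl n (X : 'M[C]_n) k u w : qf X (k *: u) w = k^* * qf X u w.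
Proof.
rewrite !qfE big_distrr; apply: eq_bigr=> a _; rewrite big_distrr.
by apply: eq_bigr=> b _; rewrite mxE rmorphM /=; ring.
Qed.

Lemma qfZr n (X : 'M[C]_n) k u w : qf X u (k *: w) = k * qf X u w.
Proof.
rewrite !qfE big_distrr; apply: eq_bigr=> a _; rewrite big_distrr.
by apply: eq_bigr=> b _; rewrite mxE /=; ring.
Qed.

Lemma qf_delta n (X : 'M[C]_n) a b :
  qf X (delta_mx a 0) (delta_mx b 0) = X a b.
Proof.
rewrite qfE (bigD1 a) //=.
have -> : \sum_(a' < n | a' != a) \sum_b0 ((delta_mx a 0 : 'cV[C]_n) a' 0)^* * X a' b0 *
     (delta_mx b 0 : 'cV[C]_n) b0 0 = 0.
  apply: big1 => a' na; apply: big1 => b' _.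
  by rewrite mxE (negbTE na) /= rmorph0 !mul0r.
rewrite (bigD1 b) //=.
have -> : \sum_(b' < n | b' != b) ((delta_mx a 0 : 'cV[C]_n) a 0)^* * X a b' *
     (delta_mx b 0 : 'cV[C]_n) b' 0 = 0.
  by apply: big1 => b' nb; rewrite [X in _ * X]mxE (negbTE nb) /= mulr0.
by rewrite !mxE !eqxx /= rmorph1 mul1r mulr1 !addr0.
Qed.

Lemma psd_sum n k (beta : 'I_k -> R) (u : 'I_k -> 'cV[C]_n) :
  (forall t, 0 <= beta t) ->
  psdmx (\sum_(t < k) ((beta t)%:C)%C *: (u t *m adjmx (u t))).
Proof.
move=> b0; split.
  rewrite adjmx_sum; apply: eq_bigr=> t _.
  by rewrite adjmxZ conjR adjmxM adjmxK.
move=> v; rewrite mulmx_sumr mulmx_suml summxE; apply: sumr_ge0=> t _.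
rewrite -scalemxAr -scalemxAl mxE.
rewrite !mulmxA -(mulmxA (adjmx v *m u t)) mxE big_ord1.
have -> : (adjmx v *m u t) 0 0 = ((adjmx (u t) *m v) 0 0)^*.
  by rewrite -adjmxE adjmxM adjmxK.
apply: mulr_ge0; first by rewrite lecR.
by rewrite mulrC mul_conjC_ge0.
Qed.

Lemma sum3V (V : nmodType) (F : 'I_3 -> V) : \sum_(i < 3) F i = F 0 + F 1 + F 2.
Proof.
rewrite !big_ord_recl big_ord0 addr0 addrA.
congr (F _ + F _ + F _); exact: val_inj.
Qed.

Lemma sum3 (F : 'I_3 -> C) : \sum_(i < 3) F i = F 0 + F 1 + F 2.
Proof.
rewrite !big_ord_recl big_ord0 addr0 addrA.
congr (F _ + F _ + F _); exact: val_inj.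
Qed.

Lemma ord3P (i : 'I_3) : [\/ i = 0, i = 1 | i = 2].
Proof.
case: i => [[|[|[|m]]] h]; [apply: Or31|apply: Or32|apply: Or33|by []];
  exact: val_inj.
Qed.

Lemma idx_eq m n (i k : 'I_m) (j l : 'I_n) :
  (mxtens_index (i, j) == mxtens_index (k, l)) = (i == k) && (j == l).
Proof. by rewrite (inj_eq (can_inj (@mxtens_indexK m n))) xpair_eqE. Qed.

Lemma sum9 (F : 'I_(3 * 3) -> C) :
  \sum_(k < 3 * 3) F k = \sum_(i < 3) \sum_(j < 3) F (mxtens_index (i, j)).
Proof.
rewrite pair_big /=.
rewrite (reindex (@mxtens_index 3 3)) /=; last first.
  by exists (@mxtens_unindex 3 3) => x _; [apply: mxtens_indexK|apply: mxtens_unindexK].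
by apply: eq_bigr => -[i j].
Qed.

Lemma tens_delta m n p q (i : 'I_m) (k : 'I_n) (j : 'I_p) (l : 'I_q) :
  (delta_mx i k : 'M[C]_(m,n)) *t (delta_mx j l : 'M[C]_(p,q)) =
  delta_mx (mxtens_index (i, j)) (mxtens_index (k, l)).
Proof.
apply/matrixP=> a b; case: (mxtens_indexP a) => i' j'.
case: (mxtens_indexP b) => k' l'.
rewrite tensmxE !mxE !idx_eq.
by case: (i' == i); case: (j' == j); case: (k' == k); case: (l' == l);
  rewrite /= ?mul0r ?mulr0 ?mul1r.
Qed.

End Infra.

End M_Infra.

Module M_Up.
Import M_Infra.
Set Implicit Arguments. Unset Strict Implicit. Unset Printing Implicit Defensive.

Lemma o01 : ((0 : 'I_3) == 1) = false. Proof. by []. Qed.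
Lemma o02 : ((0 : 'I_3) == 2) = false. Proof. by []. Qed.
Lemma o10 : ((1 : 'I_3) == 0) = false. Proof. by []. Qed.
Lemma o12 : ((1 : 'I_3) == 2) = false. Proof. by []. Qed.
Lemma o20 : ((2 : 'I_3) == 0) = false. Proof. by []. Qed.
Lemma o21 : ((2 : 'I_3) == 1) = false. Proof. by []. Qed.
Definition ord3E := (eqxx, o01, o02, o10, o12, o20, o21).

Section Up.
Variable R : realType.
Local Notation C := (complex R).

Lemma in_span_nth n (gens : seq 'M[C]_n) (k : nat) : (k < size gens)%N -> in_span gens (nth 0 gens k).
Proof.
move=> hk; exists (fun t => (t == Ordinal hk)%:R).
rewrite (bigD1 (Ordinal hk)) //= eqxx scale1r big1 ?addr0 // => t /negbTE ->.
by rewrite scale0r.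
Qed.

Lemma hsE n (Y V : 'M[C]_n) : hs Y V = \sum_i \sum_j (Y j i)^* * V j i.
Proof.
rewrite /hs /mxtrace; apply: eq_bigr => i _; rewrite mxE; apply: eq_bigr => j _.
by rewrite adjmxE.
Qed.

Variable a : R.
Local Notation c := ((cos a)%:C)%C.
Local Notation s := ((sin a)%:C)%C.

Lemma hsD n (A B V : 'M[C]_n) : hs (A + B) V = hs A V + hs B V.
Proof. by rewrite /hs adjmxD mulmxDl mxtraceD. Qed.

Lemma hsZ n k (A V : 'M[C]_n) : hs (k *: A) V = k^* * hs A V.
Proof. by rewrite /hs adjmxZ -scalemxAl mxtraceZ. Qed.

Lemma hs_delta n (i j : 'I_n) (V : 'M[C]_n) : hs (delta_mx i j) V = V i j.
Proof.
rewrite hsE (bigD1 j) //=.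
have -> : \sum_(i' < n | i' != j) \sum_j' ((delta_mx i j : 'M[C]_n) j' i')^* * V j' i' = 0.
  apply: big1 => i' ni; apply: big1 => j' _.
  by rewrite mxE (negbTE ni) andbF rmorph0 mul0r.
rewrite (bigD1 i) //=.
have -> : \sum_(j' < n | j' != i) ((delta_mx i j : 'M[C]_n) j' j)^* * V j' j = 0.
  by apply: big1 => j' nj; rewrite mxE (negbTE nj) rmorph0 mul0r.
by rewrite mxE !eqxx rmorph1 mul1r !addr0.
Qed.

Lemma adjE : adjmx (E_al a) = s *: delta_mx 1 0 + delta_mx 2 1.
Proof. by rewrite /E_al adjmxD adjmxZ !adjmx_delta conjR. Qed.

Lemma adjD : adjmx (D_al a) = c *: delta_mx 1 2 + delta_mx 0 1.
Proof. by rewrite /D_al adjmxD adjmxZ !adjmx_delta conjR. Qed.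

Lemma perp_constr (v : 'M[C]_3) :
  in_perp (nc_graph [:: E_al a; D_al a]) v ->
  [/\ v 0 0 + c ^+ 2 * v 1 1 = 0, v 2 2 + s ^+ 2 * v 1 1 = 0, v 0 2 = 0 & v 2 0 = 0].
Proof.
move=> hv.
have h (k : nat) : (k < 4)%N -> hs (nth 0 [seq adjmx E *m F | E <- [:: E_al a; D_al a], F <- [:: E_al a; D_al a]] k) v = 0.
  by move=> hk; apply: hv; apply: in_span_nth.
move: (h 0%N isT) (h 1%N isT) (h 2%N isT) (h 3%N isT) => /=.
rewrite adjE adjD /E_al /D_al.
rewrite !(mulmxDl, mulmxDr) -!scalemxAl -!scalemxAr !mul_delta_mx_cond !ord3E.
rewrite !(mulr0n, mulr1n, scaler0, addr0, add0r, scalerA).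
rewrite !(hsD, hsZ, hs_delta) !rmorphM /= !conjR => h1 h2 h3 h4.
by split => //; rewrite expr2 addrC.
Qed.

Notation idx i j := (@mxtens_index 3 3 (i, j)).

Lemma Phi3 : Phi R 3 = delta_mx (idx 0 0) 0 + delta_mx (idx 1 1) 0 + delta_mx (idx 2 2) 0 :> 'cV[C]_(3*3).
Proof.
rewrite /Phi sum3V !tens_delta.
by have -> : @mxtens_index 1 1 (0, 0) = 0 by apply: val_inj.
Qed.

Lemma qf_Phi (X : 'M[C]_(3*3)) : qf X (Phi R 3) (Phi R 3) =
  X (idx 0 0) (idx 0 0) + X (idx 0 0) (idx 1 1) + X (idx 0 0) (idx 2 2) +
  X (idx 1 1) (idx 0 0) + X (idx 1 1) (idx 1 1) + X (idx 1 1) (idx 2 2) +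
  X (idx 2 2) (idx 0 0) + X (idx 2 2) (idx 1 1) + X (idx 2 2) (idx 2 2).
Proof. rewrite Phi3 !(qfDl, qfDr) !qf_delta; ring. Qed.

Lemma Xentry (rho : 'M[C]_3) (T : 'M[C]_(3*3)) i j k l :
  ((1%:M : 'M[C]_3) *t rho + T) (idx i j) (idx k l) = (i == k)%:R * rho j l + T (idx i j) (idx k l).
Proof. by rewrite mxE tensmxE mxE. Qed.

Lemma Tentry n (v M : 'I_n -> 'M[C]_3) i j k l :
  (\sum_(m < n) (v m *t M m)) (idx i j) (idx k l) = \sum_(m < n) v m i k * M m j l.
Proof. by rewrite summxE; apply: eq_bigr => m _; rewrite tensmxE. Qed.

End Up.

End M_Up.

Module M_UB.
Import M_Infra.
Import M_Up.
Set Implicit Arguments. Unset Strict Implicit. Unset Printing Implicit Defensive.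

Section UB.
Variable R : realType.
Local Notation C := (complex R).
Variable a : R.
Local Notation c := ((cos a)%:C)%C.
Local Notation s := ((sin a)%:C)%C.
Local Notation idx i j := (@mxtens_index 3 3 (i, j)).

Lemma geC0 (x : R) : 0 <= x -> 0 <= ((x%:C)%C : C).
Proof. by move=> h; have : ((0:R)%:C)%C <= (x%:C)%C by rewrite lecR. Qed.

Lemma geC0_lt (x : R) : 0 < x -> 0 < ((x%:C)%C : C).
Proof. by move=> h; have : ((0:R)%:C)%C < (x%:C)%C by rewrite ltcR. Qed.

Lemma c_gt0 : 0 < cos a -> 0 < c.
Proof. by move=> h; have : ((0:R)%:C)%C < c by rewrite ltcR. Qed.


Lemma upper (hc : 0 < cos a) (hsc : sin a ^+ 2 <= cos a ^+ 2)
  (rho : 'M[C]_3) (T : 'M[C]_(3*3)) :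
  in_tens_full (in_perp (nc_graph [:: E_al a; D_al a])) T -> \tr rho = 1 -> psdmx rho ->
  psdmx ((1%:M : 'M[C]_3) *t rho + T) ->
  qlov_obj rho T <= (((2 + cos a ^+ 2 + (cos a ^+ 2)^-1)%:C)%C : C).
Proof.
move=> [k [v [M [hv ->]]]] htr hrho hX.
set TT := \sum_(m < k) (v m *t M m).
have LT : TT (idx 0 0) (idx 0 0) + TT (idx 0 1) (idx 0 1) +
   c ^+ 2 * (TT (idx 1 0) (idx 1 0) + TT (idx 1 1) (idx 1 1)) +
   s ^+ 2 * TT (idx 1 2) (idx 1 2) + TT (idx 2 2) (idx 2 2) +
   TT (idx 0 0) (idx 2 2) + TT (idx 2 2) (idx 0 0) = 0.
  rewrite /TT !Tentry -!big_split /= !mulr_sumr -!big_split /=.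
  apply: big1 => m _; case: (perp_constr (hv m)) => h1 h2 h3 h4.
  rewrite h3 h4.
  have -> : v m 0 0 = - (c ^+ 2 * v m 1 1) by apply/eqP; rewrite -addr_eq0 h1.
  have -> : v m 2 2 = - (s ^+ 2 * v m 1 1) by apply/eqP; rewrite -addr_eq0 h2.
  ring.
set X := (1%:M *t rho + TT).
set c2 := (((cos a ^+ 2)%:C)%C : C).
set w : 'cV[C]_(3*3) := delta_mx (idx 0 0) 0 + (- c2) *: delta_mx (idx 1 1) 0 + delta_mx (idx 2 2) 0.
have q0 : 0 <= qf X w w := hX.2 w.
have q1 : 0 <= X (idx 0 1) (idx 0 1).
  by rewrite -qf_delta; exact: hX.2.
have q2 : 0 <= X (idx 1 0) (idx 1 0).
  by rewrite -qf_delta; exact: hX.2.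
have q3 : 0 <= X (idx 1 2) (idx 1 2).
  by rewrite -qf_delta; exact: hX.2.
have q4 : 0 <= rho 2 2.
  by rewrite -qf_delta; exact: hrho.2.
have tr3 : rho 0 0 + rho 1 1 + rho 2 2 = 1 by rewrite -htr /mxtrace sum3.
set k1 := (((1 + cos a ^+ 2)%:C)%C : C).
set k2 := (((cos a ^+ 2 * (1 + cos a ^+ 2))%:C)%C : C).
set k3 := (((sin a ^+ 2 * (1 + cos a ^+ 2))%:C)%C : C).
set k4 := ((((1 + cos a ^+ 2) * (cos a ^+ 2 - sin a ^+ 2))%:C)%C : C).
have key : c2 * ((((2 + cos a ^+ 2 + (cos a ^+ 2)^-1)%:C)%C : C) - qlov_obj rho TT) =
    qf X w w + k1 * X (idx 0 1) (idx 0 1) + k2 * X (idx 1 0) (idx 1 0) +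
    k3 * X (idx 1 2) (idx 1 2) + k4 * rho 2 2.
  rewrite /w !(qfDl, qfDr, qfZl, qfZr) !qf_delta.
  change (qlov_obj rho TT) with (qf X (Phi R 3) (Phi R 3)); rewrite qf_Phi.
  rewrite /X !Xentry !ord3E /=.
  have e1 : rho 0 0 = 1 - rho 1 1 - rho 2 2 by rewrite -tr3; ring.
  set L := (X in X = 0) in LT.
  have e2 : TT (idx 0 0) (idx 0 0) = TT (idx 0 0) (idx 0 0) - L by rewrite LT subr0.
  rewrite e2 /L e1 /c2 /k1 /k2 /k3 /k4.
  rewrite !(rmorphD, rmorphM, rmorphB, rmorphN, rmorphXn, fmorphV, rmorph1, rmorph_nat) /=.
  rewrite /= ?conjR.
  have cn0 : c != 0 by rewrite gt_eqF // c_gt0.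
  by field.
have hp : 0 <= c2 * ((((2 + cos a ^+ 2 + (cos a ^+ 2)^-1)%:C)%C : C) - qlov_obj rho TT).
  have h1 : 0 <= 1 + cos a ^+ 2 by rewrite addr_ge0 ?sqr_ge0.
  rewrite key; repeat apply: addr_ge0 => //; apply: mulr_ge0 => //; apply: geC0.
  - by [].
  - by rewrite mulr_ge0 ?sqr_ge0.
  - by rewrite mulr_ge0 ?sqr_ge0.
  - by rewrite mulr_ge0 // subr_ge0.
rewrite pmulr_rge0 ?subr_ge0 // in hp.
by rewrite geC0_lt // exprn_gt0.
Qed.
End UB.

End M_UB.

Module M_Low.
Import M_Infra.
Import M_Up.
Import M_UB.
Set Implicit Arguments. Unset Strict Implicit. Unset Printing Implicit Defensive.

Section Low.
Variable R : realType.
Local Notation C := (complex R).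
Variable a : R.
Local Notation c := ((cos a)%:C)%C.
Local Notation s := ((sin a)%:C)%C.
Local Notation idx i j := (@mxtens_index 3 3 (i, j)).

Lemma hs_sum n k (cf : 'I_k -> C) (G : 'I_k -> 'M[C]_n) V :
  hs (\sum_(t < k) cf t *: G t) V = \sum_(t < k) (cf t)^* * hs (G t) V.
Proof.
rewrite /hs adjmx_sum mulmx_suml raddf_sum /=; apply: eq_bigr => t _.
by rewrite adjmxZ -scalemxAl mxtraceZ.
Qed.

Lemma gens_hs (v : 'M[C]_3) :
  [/\ hs (adjmx (E_al a) *m E_al a) v = s * s * v 1 1 + v 2 2,
      hs (adjmx (E_al a) *m D_al a) v = v 2 0,
      hs (adjmx (D_al a) *m E_al a) v = v 0 2 &
      hs (adjmx (D_al a) *m D_al a) v = c * c * v 1 1 + v 0 0].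
Proof.
rewrite adjE adjD /E_al /D_al.
rewrite !(mulmxDl, mulmxDr) -!scalemxAl -!scalemxAr !mul_delta_mx_cond !ord3E.
rewrite !(mulr0n, mulr1n, scaler0, addr0, add0r, scalerA).
by rewrite !(hsD, hsZ, hs_delta) !rmorphM /= !conjR.
Qed.

Lemma perp_of_constr (v : 'M[C]_3) :
  v 0 0 + c ^+ 2 * v 1 1 = 0 -> v 2 2 + s ^+ 2 * v 1 1 = 0 -> v 0 2 = 0 -> v 2 0 = 0 ->
  in_perp (nc_graph [:: E_al a; D_al a]) v.
Proof.
move=> h1 h2 h3 h4 Y [cf ->]; rewrite hs_sum; apply: big1 => -[t ht] _ /=.
case: (gens_hs v) => g1 g2 g3 g4.
move: ht; case: t => [|[|[|[|t]]]] ht /=.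
- by rewrite g1 -expr2 addrC h2 mulr0.
- by rewrite g2 h4 mulr0.
- by rewrite g3 h3 mulr0.
- by rewrite g4 -expr2 addrC h1 mulr0.
- by [].
Qed.


Definition den : C := 1 + c ^+ 2.
Fact rho0_key : unit. Proof. by []. Qed.
Definition rho0 : 'M[C]_3 := locked_with rho0_key ((c ^+ 2 / den) *: delta_mx 0 0 + (1 / den) *: delta_mx 1 1).
Fact K0_key : unit. Proof. by []. Qed.
Definition K0 : 'M[C]_3 := locked_with K0_key ((- c ^+ 2 / den) *: delta_mx 0 0 + (1 / (c ^+ 2 * den)) *: delta_mx 1 1).
Fact vv_key : unit. Proof. by []. Qed.
Definition vv : 'M[C]_3 := locked_with vv_key ((- c ^+ 2) *: delta_mx 0 0 + delta_mx 1 1 + (- s ^+ 2) *: delta_mx 2 2).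
Definition vf (m : 'I_3) : 'M[C]_3 := if m == 0 then vv else if m == 1 then delta_mx 0 1 else delta_mx 1 0.
Definition Mf (m : 'I_3) : 'M[C]_3 := if m == 0 then K0 else if m == 1 then delta_mx 0 1 else delta_mx 1 0.
Definition T0 : 'M[C]_(3*3) := \sum_(m < 3) (vf m *t Mf m).
Definition al0 : R := (1 + sin a ^+ 2) * cos a ^+ 2 / (1 + cos a ^+ 2).
Definition al1 : R := (cos a ^+ 2 - sin a ^+ 2) / (cos a ^+ 2 * (1 + cos a ^+ 2)).
Definition bt (t : 'I_3) : R := if t == 0 then 1 else if t == 1 then al0 else al1.
Fact psi_key : unit. Proof. by []. Qed.
Definition psi : 'cV[C]_(3*3) := locked_with psi_key (c *: delta_mx (idx 0 0) 0 + c^-1 *: delta_mx (idx 1 1) 0).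
Definition ut (t : 'I_3) : 'cV[C]_(3*3) :=
  if t == 0 then psi else if t == 1 then delta_mx (idx 2 0) 0 else delta_mx (idx 2 1) 0.

Lemma eD m n (A B : 'M[C]_(m,n)) i j : (A + B) i j = A i j + B i j.
Proof. by rewrite mxE. Qed.
Lemma eZ m n k (A : 'M[C]_(m,n)) i j : (k *: A) i j = k * A i j.
Proof. by rewrite mxE. Qed.
Lemma eDelta m n (i0 : 'I_m) (j0 : 'I_n) i j :
  (delta_mx i0 j0 : 'M[C]_(m,n)) i j = ((i == i0) && (j == j0))%:R.
Proof. by rewrite mxE. Qed.
Lemma eOuter n (u w : 'cV[C]_n) x y : (u *m adjmx w) x y = u x 0 * (w y 0)^*.
Proof. by rewrite mxE big_ord1 adjmxE. Qed.

Lemma rho0E j l : rho0 j l = c ^+ 2 / den * ((j == 0) && (l == 0))%:R + 1 / den * ((j == 1) && (l == 1))%:R.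
Proof. by rewrite /rho0 unlock !mxE. Qed.
Lemma K0E j l : K0 j l = - c ^+ 2 / den * ((j == 0) && (l == 0))%:R + 1 / (c ^+ 2 * den) * ((j == 1) && (l == 1))%:R.
Proof. by rewrite /K0 unlock !mxE. Qed.
Lemma vvE i k : vv i k = - c ^+ 2 * ((i == 0) && (k == 0))%:R + ((i == 1) && (k == 1))%:R + - s ^+ 2 * ((i == 2) && (k == 2))%:R.
Proof. by rewrite /vv unlock !mxE. Qed.
Lemma psiE x : psi x 0 = c * (x == idx 0 0)%:R + c^-1 * (x == idx 1 1)%:R.
Proof. by rewrite /psi unlock !mxE !andbT. Qed.

Lemma al0C : ((al0%:C)%C : C) = (1 + s ^+ 2) * c ^+ 2 / (1 + c ^+ 2).
Proof. by rewrite /al0 !(rmorphXn, rmorphM, rmorphD, rmorphB, fmorphV, rmorph1). Qed.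
Lemma al1C : ((al1%:C)%C : C) = (c ^+ 2 - s ^+ 2) / (c ^+ 2 * (1 + c ^+ 2)).
Proof. by rewrite /al1 !(rmorphXn, rmorphM, rmorphD, rmorphB, rmorphN, fmorphV, rmorph1). Qed.
Lemma psiCE x : (psi x 0)^* = c * (x == idx 0 0)%:R + c^-1 * (x == idx 1 1)%:R.
Proof. by rewrite psiE rmorphD !rmorphM fmorphV /= !conjR !rmorph_nat. Qed.

Lemma Xeq (hc : 0 < cos a) :
  (1%:M : 'M[C]_3) *t rho0 + T0 = \sum_(t < 3) ((bt t)%:C)%C *: (ut t *m adjmx (ut t)).
Proof.
have cn0 : c != 0.
  by rewrite gt_eqF //; have : ((0:R)%:C)%C < c by rewrite ltcR.
have dn0 : den != 0.
  rewrite gt_eqF // /den; have : ((0:R)%:C)%C < ((1 + cos a ^+ 2)%:C)%C.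
    by rewrite ltcR ltr_pwDl ?sqr_ge0.
  by rewrite rmorphD rmorph1 rmorphXn.
apply/matrixP => x y; case: (mxtens_indexP x) => i j; case: (mxtens_indexP y) => k l.
rewrite Xentry /T0 Tentry sum3 summxE sum3.
rewrite /vf /Mf /bt /ut !ord3E /=.
rewrite !eZ !eOuter al0C al1C rmorph1.
rewrite !(rho0E, K0E, vvE, psiCE, psiE, eDelta) !idx_eq !andbT /den !rmorph_nat.
rewrite /den in dn0.
case: (ord3P i) => ->; case: (ord3P j) => ->; case: (ord3P k) => ->; case: (ord3P l) => ->;
  rewrite !ord3E /=.
all: field; by rewrite ?dn0 ?cn0.
Qed.

Lemma T0_tens : in_tens_full (in_perp (nc_graph [:: E_al a; D_al a])) T0.
Proof.
exists 3%N, vf, Mf; split => // m.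
case: (ord3P m) => -> ; rewrite /vf !ord3E /=; apply: perp_of_constr;
  by rewrite ?vvE ?eDelta !ord3E /= ?(mulr0, mulr1, addr0, add0r, mulNr, mulrN, mul1r, addNr, addrN).
Qed.

Lemma rho0_tr (hc : 0 < cos a) : \tr rho0 = 1.
Proof.
have dn0 : den != 0.
  rewrite gt_eqF // /den; have : ((0:R)%:C)%C < ((1 + cos a ^+ 2)%:C)%C.
    by rewrite ltcR ltr_pwDl ?sqr_ge0.
  by rewrite rmorphD rmorph1 rmorphXn.
rewrite /mxtrace sum3 !rho0E !ord3E /= ?(mulr0, mulr1, addr0, add0r).
by rewrite -mulrDl addrC divff.
Qed.

Definition bt2 (t : 'I_2) : R := if t == 0 then cos a ^+ 2 / (1 + cos a ^+ 2) else 1 / (1 + cos a ^+ 2).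
Definition ut2 (t : 'I_2) : 'cV[C]_3 := if t == 0 then delta_mx 0 0 else delta_mx 1 0.

Lemma rho0_psd (hc : 0 < cos a) : psdmx rho0.
Proof.
have -> : rho0 = \sum_(t < 2) ((bt2 t)%:C)%C *: (ut2 t *m adjmx (ut2 t)).
  rewrite !big_ord_recl big_ord0 addr0 /bt2 /ut2 /=.
  rewrite !adjmx_delta !mul_delta_mx /rho0 unlock.
  by rewrite !(rmorphXn, rmorphM, rmorphD, fmorphV, rmorph1).
apply: psd_sum => t; rewrite /bt2; case: ifP => _.
  by rewrite divr_ge0 ?sqr_ge0 // addr_ge0 ?sqr_ge0.
by rewrite divr_ge0 // addr_ge0 ?sqr_ge0.
Qed.

Lemma X_psd (hc : 0 < cos a) (hsc : sin a ^+ 2 <= cos a ^+ 2) :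
  psdmx ((1%:M : 'M[C]_3) *t rho0 + T0).
Proof.
rewrite Xeq //; apply: psd_sum => t; rewrite /bt.
have h1 : 0 <= 1 + cos a ^+ 2 by rewrite addr_ge0 ?sqr_ge0.
case: ifP => _ //; case: ifP => _; rewrite /al0 /al1.
  by rewrite divr_ge0 // mulr_ge0 // ?sqr_ge0 // addr_ge0 ?sqr_ge0.
by rewrite divr_ge0 ?subr_ge0 // mulr_ge0 ?sqr_ge0.
Qed.

Lemma lamC : (((2 + cos a ^+ 2 + (cos a ^+ 2)^-1)%:C)%C : C) = 2 + c ^+ 2 + (c ^+ 2)^-1.
Proof. by rewrite !(rmorphXn, rmorphD, fmorphV, rmorph_nat). Qed.

Lemma obj_val (hc : 0 < cos a) (hsc : sin a ^+ 2 <= cos a ^+ 2) :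
  qlov_obj rho0 T0 = (((2 + cos a ^+ 2 + (cos a ^+ 2)^-1)%:C)%C : C).
Proof.
have cn0 : c != 0.
  by rewrite gt_eqF //; have : ((0:R)%:C)%C < c by rewrite ltcR.
change (qlov_obj rho0 T0) with (qf ((1%:M : 'M[C]_3) *t rho0 + T0) (Phi R 3) (Phi R 3)).
rewrite qf_Phi Xeq //.
rewrite !summxE !sum3 /bt /ut !ord3E /= !eZ !eOuter al0C al1C rmorph1.
rewrite !psiCE !(psiE, eDelta) !idx_eq !ord3E /= lamC.
have dn0 : 1 + c ^+ 2 != 0.
  rewrite gt_eqF //; have : ((0:R)%:C)%C < ((1 + cos a ^+ 2)%:C)%C.
    by rewrite ltcR ltr_pwDl ?sqr_ge0.
  by rewrite rmorphD rmorph1 rmorphXn.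
by field; apply/andP; split; [exact: cn0 | exact: dn0].
Qed.

End Low.

End M_Low.
Unset Implicit Arguments. Set Strict Implicit. Set Printing Implicit Defensive.
Import M_Infra.
Import M_Up.
Import M_UB.
Import M_Low.

Lemma trig_facts (R : realType) (a:R): 0<a -> a <= pi/4 ->
  [/\ 0 < cos a, sin a ^+2 <= cos a ^+2 & 0 < sin a].
Proof.
move=> a0 api.
have pi0 : 0 < pi :> R := pi_gt0 R.
have h1 : a < pi/2 by lra.
split.
- apply: cos_gt0_pihalf; apply/andP; split=> //; lra.
- have : 0 <= cos (a *+ 2).
    apply: cos_ge0_pihalf; rewrite mulr2n.
    have e1 : -(pi/2) <= a + a by lra.
    have e2 : a + a <= pi/2 by lra.
    by rewrite e1 e2.
  rewrite cos_mulr2n sin2cos2 mulr2n; lra.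
- apply: sin_gt0_pihalf; apply/andP; split=> //.
Qed.

Lemma lam_gt4 (R : realType) (x : R) : 0 < x -> x < 1 -> 4 < 2 + x + x^-1.
Proof.
move=> x0 x1.
have : 2 < x + x^-1.
  rewrite -subr_gt0.
  have -> : x + x^-1 - 2 = (x - 1)^+2 / x by field; rewrite gt_eqF.
  apply: divr_gt0 => //; rewrite exprn_even_gt0 //= subr_eq0 lt_eqF //.
lra.
Qed.

Theorem proposition2 (R : realType) (a : R) :
  0 < a -> a <= pi / 4 ->
  is_qlovasz (nc_graph [:: E_al a; D_al a])
    (((2 + cos a ^+ 2 + (cos a ^+ 2)^-1)%:C)%C) /\
  4 < 2 + cos a ^+ 2 + (cos a ^+ 2)^-1.
Proof.
move=> a0 api; case: (@trig_facts R a a0 api) => hc hsc hs.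
split; last first.
  apply: lam_gt4; first by rewrite exprn_gt0.
  rewrite cos2sin2 ltrBlDr ltrDl; by rewrite exprn_gt0.
split.
  exists (rho0 a), (T0 a); split; first exact: T0_tens.
  split; first exact: rho0_tr.
  split; first exact: rho0_psd.
  split; first exact: X_psd.
  exact: obj_val.
move=> rho T hT htr hrho hX.
exact: upper.
Qed.
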